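(* Let $P=\sum_{|\nu|\le d}a_\nu X^\nu\in\mathbb{C}[X_1,\dots,X_n]_{int}$ with $a_\nu\in{}^*\mathbb{C}$ and $d\in{}^*\mathbb{N}$ infinite. Then $P$ is absolutely bounded if and only if (i) $a_\nu\in{}^b\mathbb{C}$ for every $\nu\in\mathbb{N}^n$ (i.e. $|\nu|$ finite), and (ii) $|a_\nu|^{1/|\nu|}\in{}^i\mathbb{C}$ for every $\nu$ with $|\nu|$ infinite and $|\nu|\le d$.
   Context: ${}^*\mathbb{C}$ is an ultrapower of $\mathbb{C}$ by a nonprincipal ultrafilter; ${}^b\mathbb{C}$ (resp. ${}^i\mathbb{C}$) denotes the elements $z$ with $|z|\le r$ for some standard real $r$ (resp. $|z|<r$ for every standard real $r>0$); ${}^*\mathbb{N}$ is the corresponding extension of $\mathbb{N}$. For finite $n$, $\mathbb{C}[X_1,\dots,X_n]_{int}$ is the ultrapower of $\mathbb{C}[X_1,\dots,X_n]$ (internal polynomials); each is written uniquely as $\sum_{|\nu|\le d}a_\nu X^\nu$ over multi-indices $\nu\in{}^*\mathbb{N}^n$ and is viewed as an internal function ${}^*\mathbb{C}^n\to{}^*\mathbb{C}$. $|P|:=\sum_{|\nu|\le d}|a_\nu|X^\nu$. $P$ is absolutely bounded if $|P|({}^b\mathbb{C}^n)\subset{}^b\mathbb{C}$. *)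

(* Defs.v *)
From HB Require Import structures.
From mathcomp Require Import all_boot all_order all_algebra.
From mathcomp Require Import all_classical all_reals all_analysis.
From mathcomp Require Import complex.
Set Implicit Arguments. Unset Strict Implicit. Unset Printing Implicit Defensive.
Import Order.TTheory GRing.Theory Num.Theory.
Local Open Scope classical_set_scope.
Local Open Scope ring_scope.

Definition nonprincipal_ultrafilter (U : set (set nat)) : Prop :=
  U setT /\ ~ U set0 /\
  (forall A B : set nat, U A -> A `<=` B -> U B) /\
  (forall A B : set nat, U A -> U B -> U (A `&` B)) /\
  (forall A : set nat, U A \/ U (~` A)) /\
  (forall m : nat, ~ U [set m]).

Definition ae (U : set (set nat)) (P : nat -> Prop) : Prop := U [set k | P k].

Definition cmod (R : realType) (z : R[i]) : R :=
  match z with Complex a b => Num.sqrt (a ^+ 2 + b ^+ 2) end.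

(* an element of *C is represented by z : nat -> R[i]; of *N by nat -> nat *)

Definition hbounded (R : realType) (U : set (set nat)) (z : nat -> R[i]) : Prop :=
  exists r : R, ae U (fun k => cmod (z k) <= r).

Definition hinfinitesimal (R : realType) (U : set (set nat)) (z : nat -> R[i]) : Prop :=
  forall r : R, 0 < r -> ae U (fun k => cmod (z k) < r).

Definition hinfinite (U : set (set nat)) (m : nat -> nat) : Prop :=
  forall N : nat, ae U (fun k => (N < m k)%N).

Definition multi (n : nat) := {ffun 'I_n -> nat}.
Definition mdeg (n : nat) (nu : multi n) : nat := (\sum_(i < n) nu i)%N.

(* A standard polynomial in n variables is given by its coefficient function
   multi n -> R[i]; an internal polynomial P is a sequence of such (k-th
   component P k). *)

(* value at index k of |P|(z) = sum_{|nu| <= d} |a_nu| z^nu, the sum being over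
   the (finitely many) multi-indices of total degree <= d k *)
Definition absP_eval (R : realType) (n : nat) (P : nat -> multi n -> R[i])
    (d : nat -> nat) (z : 'I_n -> nat -> R[i]) (k : nat) : R[i] :=
  \sum_(nu : {ffun 'I_n -> 'I_(d k).+1} | (\sum_(i < n) nu i <= d k)%N)
     ((cmod (P k [ffun i => val (nu i)]))%:C%C *
      \prod_(i < n) z i k ^+ (val (nu i))).

Definition abs_bounded (R : realType) (U : set (set nat)) (n : nat)
    (P : nat -> multi n -> R[i]) (d : nat -> nat) : Prop :=
  forall z : 'I_n -> nat -> R[i],
    (forall i : 'I_n, hbounded U (z i)) ->
    hbounded U (absP_eval P d z).

(* Main.v *)
Require Import Defs.
From HB Require Import structures.
From mathcomp Require Import ring lra.
From mathcomp Require Import all_boot all_order all_algebra.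
From mathcomp Require Import all_classical all_reals all_analysis.
From mathcomp Require Import complex.
From Stdlib Require Import Classical.
Import Order.TTheory GRing.Theory Num.Theory.
Local Open Scope classical_set_scope.
Local Open Scope ring_scope.

Section Cm.
Variable R : realType.
Implicit Types x y : R[i].

Lemma cmodE x : cmod x = Normc.normc x.
Proof. by case: x. Qed.

Lemma cmod_ge0 x : 0 <= cmod x.
Proof. by case: x => a b /=; apply: sqrtr_ge0. Qed.

Lemma cmodM x y : cmod (x * y) = cmod x * cmod y.
Proof. by rewrite !cmodE Normc.normcM. Qed.

Lemma cmodD x y : cmod (x + y) <= cmod x + cmod y.
Proof. rewrite !cmodE; exact: (@le_normcD R x y). Qed.

Lemma cmod0 : cmod (0 : R[i]) = 0.
Proof. by rewrite cmodE Normc.normc0. Qed.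

Lemma cmod1 : cmod (1 : R[i]) = 1.
Proof. by rewrite cmodE Normc.normc1. Qed.

Lemma cmodX x m : cmod (x ^+ m) = cmod x ^+ m.
Proof. elim: m => [|m IH]; by rewrite ?expr0 ?cmod1 // !exprS cmodM IH. Qed.

Lemma cmodR (a : R) : 0 <= a -> cmod (a%:C)%C = a.
Proof. move=> ha /=; rewrite expr0n /= addr0 sqrtr_sqr ger0_norm //. Qed.

Lemma cmod_sum (I : finType) (P : pred I) (F : I -> R[i]) :
  cmod (\sum_(i | P i) F i) <= \sum_(i | P i) cmod (F i).
Proof.
elim/big_rec2: _ => [|i y1 y2 _ IH]; first by rewrite cmod0.
apply: le_trans (cmodD _ _) _; by rewrite lerD2l.
Qed.

Lemma cmod_prod (I : finType) (F : I -> R[i]) :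
  cmod (\prod_i F i) = \prod_i cmod (F i).
Proof.
elim/big_rec2: _ => [|i y1 y2 _ IH]; first by rewrite cmod1.
by rewrite cmodM IH.
Qed.

End Cm.


Section Ae.
Variable U : set (set nat).
Hypothesis hU : nonprincipal_ultrafilter U.

Lemma ae_mono {P Q : nat -> Prop} : ae U P -> (forall k, P k -> Q k) -> ae U Q.
Proof. case: hU => _ [_ [hm _]] hP hPQ; apply: hm hP _ => k; exact: hPQ. Qed.

Lemma ae_and {P Q : nat -> Prop} : ae U P -> ae U Q -> ae U (fun k => P k /\ Q k).
Proof. case: hU => _ [_ [_ [hi _]]] hP hQ; exact: hi. Qed.

Lemma ae_T : ae U (fun _ => True).
Proof. case: hU => hT _; rewrite /ae; by have -> : [set _ | True] = setT. Qed.

Lemma ae_ex {P : nat -> Prop} : ae U P -> exists k, P k.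
Proof.
case: hU => _ [h0 _] hP; apply: contrapT => hn; apply: h0.
suff <- : [set k | P k] = set0 by [].
by apply/seteqP; split => k //= Pk; apply: hn; exists k.
Qed.

Lemma ae_em (P : nat -> Prop) : ae U P \/ ae U (fun k => ~ P k).
Proof. by case: hU => _ [_ [_ [_ [hc _]]]]; exact: hc. Qed.

Lemma ae_ge N : ae U (fun k => (N <= k)%N).
Proof.
elim: N => [|N IH]; first exact: (ae_mono ae_T (fun k _ => leq0n k)).
case: hU => _ [_ [_ [_ [hc hnp]]]].
have hN : ae U (fun k => k <> N).
  by case: (hc [set N]) => [/hnp[]|h]; exact: h.
eapply ae_mono; first exact: (ae_and IH hN). move=> k [h1 h2]; rewrite ltn_neqAle h1 andbT; apply/eqP=> e; exact: h2 (esym e).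
Qed.

Lemma ae_seq (T : eqType) (s : seq T) (Q : T -> nat -> Prop) :
  (forall t, ae U (Q t)) -> ae U (fun k => forall t, t \in s -> Q t k).
Proof.
move=> hQ; elim: s => [|t s IH]; first by eapply ae_mono; [exact: ae_T|].
eapply ae_mono; first exact: (ae_and (hQ t) IH). move=> k [h1 h2] t'; rewrite inE => /orP[/eqP->//|]; exact: h2.
Qed.

Lemma ae_bound (R : realType) (T : eqType) (s : seq T) (f : T -> nat -> R) :
  (forall t, exists r, ae U (fun k => f t k <= r)) ->
  exists r, ae U (fun k => forall t, t \in s -> f t k <= r).
Proof.
move=> hf; elim: s => [|t s [r IH]]; first by exists 0; eapply ae_mono; [exact: ae_T|].
have [r' h'] := hf t; exists (Num.max r r').
eapply ae_mono; first exact: (ae_and h' IH). move=> k [h1 h2] t'; rewrite inE => /orP[/eqP->|ht].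
  by rewrite le_max h1 orbT.
by rewrite le_max h2.
Qed.

End Ae.
Arguments ae_mono {U} hU {P Q}.
Arguments ae_and {U} hU {P Q}.
Arguments ae_T {U} hU.
Arguments ae_ex {U} hU {P}.
Arguments ae_em {U} hU P.
Arguments ae_ge {U} hU N.
Arguments ae_seq {U} hU {T} s Q.
Arguments ae_bound {U} hU {R T} s f.


Lemma powR_invK (R : realType) (x : R) (m : nat) : 0 <= x -> m != 0%N ->
  (powR x (m%:R^-1)) ^+ m = x.
Proof.
move=> hx hm; rewrite -powR_mulrn ?powR_ge0 // -powRrM mulVf ?pnatr_eq0 //.
exact: powRr1.
Qed.

Lemma geom_le2 (R : realType) (M : nat) : \sum_(j < M) (2^-1 : R) ^+ j <= 2.
Proof.
suff : \sum_(j < M) (2^-1 : R) ^+ j <= 2 - 2 * (2^-1) ^+ M.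
  move=> h; apply: le_trans h _.
  have : 0 <= (2^-1 : R) ^+ M by rewrite exprn_ge0 // invr_ge0.
  lra.
elim: M => [|M IH]; first by rewrite big_ord0 expr0 mulr1 subrr.
rewrite big_ord_recr /= exprS.
move: IH; set y := (2^-1 : R) ^+ M; set S := \sum_(j < M) _; lra.
Qed.

Lemma sum_filt_le (R : realType) (T : finType) (Pr : pred T) (F : T -> R) :
  (forall t, 0 <= F t) -> \sum_(t | Pr t) F t <= \sum_t F t.
Proof.
move=> h; rewrite [X in _ <= X](bigID Pr) /= lerDl; exact: sumr_ge0.
Qed.

Lemma term_le_sum (R : realType) (T : finType) (Pr : pred T) (F : T -> R) t0 :
  (forall t, 0 <= F t) -> Pr t0 -> F t0 <= \sum_(t | Pr t) F t.
Proof.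
move=> h ht; rewrite (bigD1 t0) //= lerDl; exact: sumr_ge0.
Qed.

Lemma mdeg_ge {n : nat} (nu : multi n) i : (nu i <= mdeg nu)%N.
Proof. by rewrite /mdeg (bigD1 i) //= leq_addr. Qed.

Lemma emb_inord (n M : nat) (nu : multi n) : (mdeg nu <= M)%N ->
  [ffun i => val (([ffun i => inord (nu i)] : {ffun 'I_n -> 'I_M.+1}) i)] = nu
  /\ (\sum_(i < n) val (([ffun i => inord (nu i)] : {ffun 'I_n -> 'I_M.+1}) i) = mdeg nu)%N.
Proof.
move=> hM.
have e : forall i, val (([ffun i => inord (nu i)] : {ffun 'I_n -> 'I_M.+1}) i) = nu i.
  by move=> i; rewrite ffunE /= inordK // ltnS (leq_trans (mdeg_ge nu i)).
split; first by apply/ffunP => i; rewrite ffunE e.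
by rewrite /mdeg; apply: eq_bigr => i _; rewrite e.
Qed.

Lemma absP_const (R : realType) (n : nat) (P : nat -> multi n -> R[i]) d (c : R) k :
  absP_eval P d (fun _ _ => (c%:C)%C) k =
  ((\sum_(nu : {ffun 'I_n -> 'I_(d k).+1} | (\sum_(i < n) nu i <= d k)%N)
     cmod (P k [ffun i => val (nu i)]) * c ^+ (\sum_(i < n) val (nu i)))%:C)%C.
Proof.
rewrite /absP_eval rmorph_sum; apply: eq_bigr => t _.
by rewrite rmorphM /= prodrXr rmorphXn.
Qed.


Lemma sumC_ge0 (R : realType) (n : nat) (P : nat -> multi n -> R[i]) d (c : R) k :
  0 <= c ->
  0 <= \sum_(nu : {ffun 'I_n -> 'I_(d k).+1} | (\sum_(i < n) nu i <= d k)%N)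
     cmod (P k [ffun i => val (nu i)]) * c ^+ (\sum_(i < n) val (nu i)).
Proof.
move=> hc; apply: sumr_ge0 => t _; apply: mulr_ge0; first exact: cmod_ge0.
exact: exprn_ge0.
Qed.

Lemma fwd_i (R : realType) (U : set (set nat)) (hU : nonprincipal_ultrafilter U)
  (n : nat) (P : nat -> multi n -> R[i]) (d : nat -> nat) :
  hinfinite U d -> abs_bounded U P d ->
  forall nu : multi n, hbounded U (fun k => P k nu).
Proof.
move=> hd hab nu0.
have hz : forall i : 'I_n, hbounded U (fun _ => ((1:R)%:C)%C).
  move=> i; exists 1; eapply (ae_mono hU); [exact: ae_T hU|] => k _.
  by rewrite cmodR.
have [M hM] := hab _ hz; exists M.
eapply (ae_mono hU); first exact: (ae_and hU hM (hd (mdeg nu0))).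
move=> k [hk hdk]; apply: le_trans hk.
rewrite absP_const cmodR; last exact: sumC_ge0.
have [e1 e2] := @emb_inord _ _ _ (ltnW hdk).
pose t0 : {ffun 'I_n -> 'I_(d k).+1} := [ffun i => inord (nu0 i)].
apply: le_trans (@term_le_sum R _ (fun t : {ffun 'I_n -> 'I_(d k).+1} => (\sum_(i < n) t i <= d k)%N)
  (fun t => cmod (P k [ffun i => val (t i)]) * 1 ^+ (\sum_(i < n) val (t i))) t0 _ _).
- by rewrite /t0 e1 expr1n mulr1.
- by move=> t; apply: mulr_ge0; [exact: cmod_ge0| exact: exprn_ge0].
- by rewrite /t0 /= e2 (ltnW hdk).
Qed.

Lemma fwd_ii (R : realType) (U : set (set nat)) (hU : nonprincipal_ultrafilter U)
  (n : nat) (P : nat -> multi n -> R[i]) (d : nat -> nat) :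
  abs_bounded U P d ->
   (forall nu : nat -> multi n,
      hinfinite U (fun k => mdeg (nu k)) ->
      ae U (fun k => (mdeg (nu k) <= d k)%N) ->
      forall r : R, 0 < r ->
        ae U (fun k => powR (cmod (P k (nu k))) ((mdeg (nu k))%:R^-1) < r)).
Proof.
move=> hab nu hinf hle r hr.
case: (ae_em hU (fun k => powR (cmod (P k (nu k))) ((mdeg (nu k))%:R^-1) < r)) => // hge.
have hc : 0 <= 2 / r by rewrite divr_ge0 // ltW.
have hz : forall i : 'I_n, hbounded U (fun _ => ((2 / r)%:C)%C).
  move=> i; exists (2 / r); eapply (ae_mono hU); [exact: ae_T hU|] => k _.
  by rewrite cmodR.
have [M hM] := hab _ hz.
pose N := Num.Def.archi_bound `|M|.
have hMN : M < N%:R by apply: le_lt_trans (ler_norm M) (archi_boundP _).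
have [k [hk [hNk [hlek hgek]]]] := ae_ex hU (ae_and hU hM (ae_and hU (hinf N) (ae_and hU hle hge))).
move: hk; rewrite absP_const cmodR; last exact: sumC_ge0.
set m := mdeg (nu k) in hNk hlek hgek *.
set x := cmod (P k (nu k)) in hgek *.
have hm : m != 0%N by rewrite -lt0n (leq_ltn_trans _ hNk).
have hx : 0 <= x by exact: cmod_ge0.
have hxr : r ^+ m <= x.
  have hp : r <= x `^ m%:R^-1 by rewrite leNgt; apply/negP.
  rewrite -(@powR_invK R x m hx hm); apply: lerXn2r => //; rewrite nnegrE ?powR_ge0 //.
  exact: ltW.
have [e1 e2] := @emb_inord _ _ _ hlek.
pose t0 : {ffun 'I_n -> 'I_(d k).+1} := [ffun i => inord (nu k i)].
have := (@term_le_sum R _ (fun t : {ffun 'I_n -> 'I_(d k).+1} => (\sum_(i < n) t i <= d k)%N)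
  (fun t => cmod (P k [ffun i => val (t i)]) * (2 / r) ^+ (\sum_(i < n) val (t i))) t0).
rewrite /t0 /= e1 e2 hlek => /(_ _ isT) h.
move=> hs; have {h} h : x * (2 / r) ^+ m <= M.
  apply: le_trans (h _) hs.
  by move=> t; apply: mulr_ge0; [exact: cmod_ge0| exact: exprn_ge0].
have h2 : (2:R) ^+ m <= x * (2 / r) ^+ m.
  have -> : (2:R) ^+ m = r ^+ m * (2 / r) ^+ m.
    rewrite -exprMn; congr (_ ^+ _); field; exact: lt0r_neq0.
  rewrite ler_wpM2r //; exact: exprn_ge0.
have h3 : (N%:R : R) < 2 ^+ m.
  by rewrite -natrX ltr_nat; exact: ltn_trans hNk (ltn_expl _ (isT : (1 < 2)%N)).
have : M < M := lt_le_trans hMN (le_trans (ltW h3) (le_trans h2 h)).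
by rewrite ltxx.
Qed.


Lemma stepA (R : realType) (U : set (set nat)) (hU : nonprincipal_ultrafilter U)
  (n : nat) (P : nat -> multi n -> R[i]) (d : nat -> nat) (c : R) :
  0 < c ->
   (forall nu : nat -> multi n,
      hinfinite U (fun k => mdeg (nu k)) ->
      ae U (fun k => (mdeg (nu k) <= d k)%N) ->
      forall r : R, 0 < r ->
        ae U (fun k => powR (cmod (P k (nu k))) ((mdeg (nu k))%:R^-1) < r)) ->
  exists N, ae U (fun k => forall nu : multi n, (N <= mdeg nu)%N ->
     (mdeg nu <= d k)%N -> cmod (P k nu) <= c ^+ mdeg nu).
Proof.
move=> hc hii; apply: NNPP => hnot.
pose Q N k := forall nu : multi n, (N <= mdeg nu)%N ->
     (mdeg nu <= d k)%N -> cmod (P k nu) <= c ^+ mdeg nu.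
have hB : forall N, ae U (fun k => ~ Q N k).
  move=> N; case: (ae_em hU (Q N)) => // h; exfalso; apply: hnot; by exists N.
have mx : forall k i, ~ Q 0%N k -> exists j, (j <= i)%N /\ ~ Q j k /\
    forall j', (j' <= i)%N -> ~ Q j' k -> (j' <= j)%N.
  move=> k; elim=> [|i IH] h0.
    by exists 0%N; split => //; split => // j'; rewrite leqn0 => /eqP->.
  case: (classic (Q i.+1 k)) => hq; last first.
    by exists i.+1; split => //; split => // j' /(_ : (j' <= i.+1)%N).
  have [j [hj1 [hj2 hj3]]] := IH h0; exists j; split; first exact: leqW.
  split => // j'; rewrite leq_eqVlt => /orP[/eqP->|]; first by [].
  rewrite ltnS; exact: hj3.
have ex : forall k, exists nu : multi n, ~ Q 0%N k ->
    [/\ (mdeg nu <= d k)%N, c ^+ mdeg nu < cmod (P k nu) &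
        forall j, (j <= k)%N -> ~ Q j k -> (j <= mdeg nu)%N].
  move=> k; case: (classic (Q 0%N k)) => h0.
    by exists [ffun => 0%N].
  have [j [hj1 [hj2 hj3]]] := mx k k h0.
  have [nu hnu] := not_all_ex_not _ _ hj2; exists nu => _.
  have [h1 h2] := imply_to_and _ _ hnu; have [h3 h4] := imply_to_and _ _ h2.
  split => //; first by rewrite ltNge; apply/negP.
  move=> j' hj' hq; exact: leq_trans (hj3 j' hj' hq) h1.
have [f hf] := choice ex.
have hinf : hinfinite U (fun k => mdeg (f k)).
  move=> N; eapply (ae_mono hU).
    exact: (ae_and hU (hB 0%N) (ae_and hU (hB N.+1) (ae_ge hU N.+1))).
  move=> k [h0 [hN hk]]; have [_ _ h3] := hf k h0; exact: h3.
have hle : ae U (fun k => (mdeg (f k) <= d k)%N).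
  eapply (ae_mono hU); first exact: (hB 0%N).
  by move=> k h0; have [h1 _ _] := hf k h0.
have [k [hk [h0 h1]]] := ae_ex hU (ae_and hU (hii f hinf hle c hc)
   (ae_and hU (hB 0%N) (hinf 0%N))).
have [_ h2 _] := hf k h0.
set m := mdeg (f k) in hk h1 h2.
set x := cmod (P k (f k)) in hk h2.
have hx : 0 <= x by exact: cmod_ge0.
have hm : m != 0%N by rewrite -lt0n.
have : x < c ^+ m.
  rewrite -(@powR_invK R x m hx hm) ltrXn2r ?powR_ge0 //.
by rewrite ltNge (ltW h2).
Qed.


Lemma bwd (R : realType) (U : set (set nat)) (hU : nonprincipal_ultrafilter U)
  (n : nat) (P : nat -> multi n -> R[i]) (d : nat -> nat) :
  (forall nu : multi n, hbounded U (fun k => P k nu)) ->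
   (forall nu : nat -> multi n,
      hinfinite U (fun k => mdeg (nu k)) ->
      ae U (fun k => (mdeg (nu k) <= d k)%N) ->
      forall r : R, 0 < r ->
        ae U (fun k => powR (cmod (P k (nu k))) ((mdeg (nu k))%:R^-1) < r)) ->
  abs_bounded U P d.
Proof.
move=> hi hii z hz.
have [r0 hr0] := ae_bound hU (enum 'I_n) (fun i k => cmod (z i k)) hz.
pose r := Num.max r0 1.
have hr1 : 1 <= r by rewrite le_max lexx orbT.
have hr0' : 0 < r by apply: lt_le_trans hr1.
pose c := (2 * r)^-1.
have hc : 0 < c by rewrite invr_gt0 mulr_gt0.
have hc1 : c <= 1 by rewrite invf_le1; [lra | rewrite mulr_gt0].
have hcr : c * r = 2^-1 by rewrite /c; field; exact: lt0r_neq0.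
have [N hA] := @stepA _ _ hU _ P d _ hc hii.
have [B hB] := ae_bound hU (enum {ffun 'I_n -> 'I_N.+1})
   (fun t k => cmod (P k [ffun i => val (t i)])) (fun t => hi _).
pose w := (c^-1) ^+ N.
pose K := 1 + `|B| * w.
have hw : 0 <= w by rewrite exprn_ge0 // invr_ge0 ltW.
have hK1 : 1 <= K by rewrite lerDl mulr_ge0.
exists (K * 2 ^+ n).
eapply (ae_mono hU); first exact: (ae_and hU hr0 (ae_and hU hA hB)).
move=> k [hzk [hAk hBk]].
have hK : forall nu, (mdeg nu <= d k)%N -> cmod (P k nu) <= K * c ^+ mdeg nu.
  move=> nu hnu; case: (leqP N (mdeg nu)) => hN.
    apply: le_trans (hAk nu hN hnu) _; apply: ler_peMl => //.
    by rewrite exprn_ge0 // ltW.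
  have [e1 _] := @emb_inord n N nu (ltnW hN).
  have hb := hBk [ffun i => inord (nu i)] (mem_enum _ _); rewrite e1 in hb.
  apply: le_trans hb _.
  have hab : c ^+ N <= c ^+ mdeg nu by apply: ler_wiXn2l => //; [exact: ltW | exact: ltnW].
  have hbw : c ^+ N * w = 1 by rewrite /w -exprMn divff ?expr1n // lt0r_neq0.
  have ha : 0 <= c ^+ mdeg nu by rewrite exprn_ge0 // ltW.
  have h1 : `|B| <= `|B| * w * c ^+ mdeg nu.
    rewrite -mulrA; apply: le_trans (ler_wpM2l (normr_ge0 B) (ler_wpM2l hw hab)).
    by rewrite [w * _]mulrC hbw mulr1.
  have h2 := ler_norm B.
  rewrite /K mulrDl mul1r; lra.
have hzr : forall i, cmod (z i k) <= r.
  by move=> i; apply: le_trans (hzk i (mem_enum _ _)) _; rewrite le_max lexx.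
rewrite /absP_eval; apply: le_trans (cmod_sum _ _ _ _) _.
apply: (@le_trans _ _ (\sum_(t : {ffun 'I_n -> 'I_(d k).+1} | (\sum_(i < n) t i <= d k)%N)
    K * \prod_(i < n) (2^-1 : R) ^+ (t i))).
  apply: ler_sum => t ht.
  rewrite cmodM cmod_prod cmodR ?cmod_ge0 //.
  have em : mdeg [ffun i => val (t i)] = (\sum_(i < n) val (t i))%N.
    by rewrite /mdeg; apply: eq_bigr => i _; rewrite ffunE.
  have e3 : K * \prod_(i < n) (2^-1 : R) ^+ (t i) =
      (K * c ^+ (\sum_(i < n) val (t i))) * \prod_(i < n) r ^+ (t i).
    rewrite -prodrXr -mulrA -big_split /=; congr (_ * _); apply: eq_bigr => i _.
    by rewrite -exprMn hcr.
  rewrite e3; apply: ler_pM.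
  - exact: cmod_ge0.
  - by apply: prodr_ge0 => i _; rewrite cmodX exprn_ge0 // cmod_ge0.
  - by rewrite -em; apply: hK; rewrite em.
  - apply: ler_prod => i _; rewrite cmodX exprn_ge0 ?cmod_ge0 //=.
    by apply: lerXn2r; rewrite ?nnegrE ?cmod_ge0 ?(ltW hr0').
apply: le_trans; first apply: sum_filt_le.
  by move=> t; rewrite mulr_ge0 ?(le_trans ler01 hK1) // prodr_ge0 // => i _; rewrite exprn_ge0 // invr_ge0.
rewrite -mulr_sumr; apply: ler_wpM2l; first exact: le_trans ler01 hK1.
rewrite -(bigA_distr_bigA (fun (i : 'I_n) (j : 'I_(d k).+1) => (2^-1 : R) ^+ j)) /=.
have -> : (2:R) ^+ n = \prod_(i < n) 2 by rewrite prodr_const card_ord.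
apply: ler_prod => i _; rewrite sumr_ge0 ?geom_le2 // => j _.
Qed.


Theorem proposition1p4p2 (R : realType) (U : set (set nat))
    (hU : nonprincipal_ultrafilter U) (n : nat)
    (P : nat -> multi n -> R[i]) (d : nat -> nat)
    (hP : ae U (fun k => forall nu : multi n, (d k < mdeg nu)%N -> P k nu = 0))
    (hd : hinfinite U d) :
  abs_bounded U P d <->
  ((forall nu : multi n, hbounded U (fun k => P k nu)) /\
   (forall nu : nat -> multi n,
      hinfinite U (fun k => mdeg (nu k)) ->
      ae U (fun k => (mdeg (nu k) <= d k)%N) ->
      forall r : R, 0 < r ->
        ae U (fun k => powR (cmod (P k (nu k))) ((mdeg (nu k))%:R^-1) < r))).
Proof.
split.
  move=> hab; split; first exact: (@fwd_i _ _ hU _ P d hd hab).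
  exact: (@fwd_ii _ _ hU _ P d hab).
by case=> hi hii; exact: (@bwd _ _ hU _ P d hi hii).
Qed.
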